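(* Let $\mathcal{P}=(\Xi,\Omega,(\mathcal{M},d),\Lambda)$ be an SCI problem with countable $\Lambda=\{f_n\}_{n\in\mathbb{N}}$ satisfying consistency, let $\delta_\mathcal{M}$ be a representation of $\mathcal{M}$, and let $\mathcal{R}$ be a class of partial functionals $\subseteq\mathbb{N}^\mathbb{N}\to\mathbb{N}^\mathbb{N}$ with the following $\lim$-normal-form property: for every single-valued problem $f$ between represented spaces and every $k\in\mathbb{N}_0$, $f\le_{\mathrm W}^{\mathcal{R}}\lim^{(k)}$ holds if and only if there exists $K\in\mathcal{R}$ with $\lim^{(k)}\circ K\preceq f$. Then $\mathrm{SCI}_{A,\mathcal{R}}(\mathcal{P})=\mathrm{rank}_{\mathcal{R}}(\widehat\Xi)$.
   Context: Consistency: $\Xi(A)\neq\Xi(B)$ implies $f(A)\neq f(B)$ for some $f\in\Lambda$. $\mathrm{Ev}_\Lambda(A):=(f_n(A))_{n}\in\mathbb{C}^\mathbb{N}$, $I_\Lambda:=\mathrm{Ev}_\Lambda(\Omega)$ carries the subspace representation $\delta_{I_\Lambda}$ of the product of Cauchy representations of $\mathbb{C}$; $\widehat\Xi:I_\Lambda\to\mathcal{M}$ is the unique map with $\widehat\Xi\circ\mathrm{Ev}_\Lambda=\Xi$, viewed as a single-valued map $(I_\Lambda,\delta_{I_\Lambda})\to(\mathcal{M},\delta_\mathcal{M})$. $\lim$ is the limit operator on Baire space ($\lim(p)(k)=\lim_n p(\langle n,k\rangle)$, defined when each such sequence is eventually constant), $\lim^{(0)}=\mathrm{id}$, $\lim^{(k+1)}=\lim\circ\lim^{(k)}$.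 For a single-valued $f:\subseteq X\to Y$ between represented spaces, $\lim^{(k)}\circ K\preceq f$ means: for every name $p\in\mathrm{dom}(\delta_X)$ of a point $x\in\mathrm{dom}(f)$, $K(p)\in\mathrm{dom}(\lim^{(k)})$ and $\delta_Y(\lim^{(k)}(K(p)))=f(x)$. $f\le_{\mathrm W}^{\mathcal{R}}g$ means there exist $H,K\in\mathcal{R}$ such that for every realizer $G$ of $g$, $p\mapsto K(\langle p,G(H(p))\rangle)$ realizes $f$. $\mathrm{rank}_{\mathcal{R}}(f):=\min\{k\in\mathbb{N}_0:f\le_{\mathrm W}^{\mathcal{R}}\lim^{(k)}\}$ (or $\infty$). $\mathcal{P}$ has a pure $\mathcal{R}$-$\lim$-tower of height $k$ if there exists $K\in\mathcal{R}$ with $\lim^{(k)}\circ K\preceq\widehat\Xi$; $\mathrm{SCI}_{A,\mathcal{R}}(\mathcal{P})$ is the least such $k$, or $\infty$. *)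

(* Defs.v *)
From Stdlib Require Import Reals QArith ZArith Arith Cantor ClassicalEpsilon.

Definition Baire := nat -> nat.
Definition PFun := Baire -> option Baire.

Definition npair (n k : nat) : nat := Cantor.to_nat (n, k).

Definition bpair (p q : Baire) : Baire :=
  fun m => if Nat.even m then p (Nat.div2 m) else q (Nat.div2 m).

(** A representation of a type X: a (partial) naming relation
    [name p x] meaning "delta(p) = x". *)
Definition naming (X : Type) := Baire -> X -> Prop.

Definition is_rep {X : Type} (name : naming X) : Prop :=
  (forall p x x', name p x -> name p x' -> x = x') /\
  (forall x, exists p, name p x).

(** (Partial) problems as relations; dom f = {x | exists y, f x y}. *)
Definition single_valued {X Y : Type} (f : X -> Y -> Prop) : Prop :=
  forall x y y', f x y -> f x y' -> y = y'.

Definition realizes {X Y : Type} (nX : naming X) (nY : naming Y)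
  (f : X -> Y -> Prop) (G : PFun) : Prop :=
  forall p x, nX p x -> (exists y, f x y) ->
    exists q y, G p = Some q /\ nY q y /\ f x y.

Definition WeihR (R : PFun -> Prop)
  {X Y Z W : Type} (nX : naming X) (nY : naming Y) (f : X -> Y -> Prop)
  (nZ : naming Z) (nW : naming W) (g : Z -> W -> Prop) : Prop :=
  exists H K, R H /\ R K /\
    forall G : PFun, realizes nZ nW g G ->
      realizes nX nY f
        (fun p => match H p with
                  | Some h => match G h with
                              | Some r => K (bpair p r)
                              | None => None end
                  | None => None end).

Definition lim_rel (p q : Baire) : Prop :=
  forall k, exists N, forall n, (N <= n)%nat -> p (npair n k) = q k.

Fixpoint limk (k : nat) (p q : Baire) : Prop :=
  match k with
  | O => p = q
  | S k' => exists r, limk k' p r /\ lim_rel r q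
  end.

Definition baire_name : naming Baire := fun p q => p = q.

Definition tower_pre {X Y : Type} (nX : naming X) (nY : naming Y)
  (f : X -> Y -> Prop) (k : nat) (K : PFun) : Prop :=
  forall p x, nX p x -> (exists y, f x y) ->
    exists q r y, K p = Some q /\ limk k q r /\ nY r y /\ f x y.

(** min { k | P k } in N_0, or None (= infinity) if no such k. *)
Definition minN (P : nat -> Prop) : option nat :=
  epsilon (inhabits None)
    (fun o : option nat => match o with
       | Some k => P k /\ forall j, P j -> (k <= j)%nat
       | None => forall k, ~ P k end).

Definition rankR (R : PFun -> Prop) {X Y : Type} (nX : naming X)
  (nY : naming Y) (f : X -> Y -> Prop) : option nat :=
  minN (fun k => WeihR R nX nY f baire_name baire_name (limk k)).

Definition Cx := (R * R)%type.

Definition zdec (n : nat) : Z :=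
  if Nat.even n then Z.of_nat (Nat.div2 n) else (- Z.of_nat (Nat.div2 (S n)))%Z.

Definition qdec (n : nat) : Q :=
  let (a, b) := Cantor.of_nat n in Qmake (zdec a) (Pos.of_succ_nat b).

Definition gqdec (n : nat) : Cx :=
  let (a, b) := Cantor.of_nat n in (Q2R (qdec a), Q2R (qdec b)).

Definition cdist (z w : Cx) : R :=
  sqrt ((fst z - fst w)^2 + (snd z - snd w)^2)%R.

Definition cauchy_name : naming Cx :=
  fun p z => forall n, (cdist (gqdec (p n)) z <= (/ 2) ^ n)%R.

Definition prod_cauchy_name : naming (nat -> Cx) :=
  fun p z => forall n, cauchy_name (fun k => p (npair n k)) (z n).

Section SCI.
Context {Omega M : Type} (fs : nat -> Omega -> Cx) (Xi : Omega -> M).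

Definition consistent : Prop :=
  forall A B : Omega, Xi A <> Xi B -> exists n, fs n A <> fs n B.

Definition Ev (A : Omega) : nat -> Cx := fun n => fs n A.

Definition ILam : Type := { x : nat -> Cx | exists A, Ev A = x }.

Definition ILam_name : naming ILam := fun p x => prod_cauchy_name p (proj1_sig x).

Definition Xihat : ILam -> M -> Prop :=
  fun x m => exists A, Ev A = proj1_sig x /\ Xi A = m.

Definition SCI_AR (R : PFun -> Prop) (nM : naming M) : option nat :=
  minN (fun k => exists K, R K /\ tower_pre ILam_name nM Xihat k K).
End SCI.

(* Main.v *)
Require Import Defs.
From Stdlib Require Import Reals QArith ZArith Arith Cantor ClassicalEpsilon Lra Lia
  Classical PropExtensionality FunctionalExtensionality ProofIrrelevance.
Open Scope R_scope.

Lemma zdec_surj : forall z, exists a, zdec a = z.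
Proof.
  assert (E1 : forall m, zdec (2*m) = Z.of_nat m).
  { intro m. unfold zdec. rewrite Nat.even_mul, Nat.div2_double. reflexivity. }
  assert (E2 : forall m, zdec (2*m+1) = (- Z.of_nat (S m))%Z).
  { intro m. unfold zdec. rewrite Nat.even_add, Nat.even_mul.
    replace (S (2 * m + 1)) with (2 * S m)%nat by lia.
    rewrite Nat.div2_double. reflexivity. }
  intros [|p|p].
  - exists 0%nat. apply (E1 0%nat).
  - exists (2 * Pos.to_nat p)%nat. rewrite E1. apply positive_nat_Z.
  - exists (2 * Init.Nat.pred (Pos.to_nat p) + 1)%nat. rewrite E2.
    rewrite Nat.succ_pred_pos by lia. rewrite positive_nat_Z. reflexivity.
Qed.

Lemma qdec_surj : forall z b, exists m, qdec m = Qmake z (Pos.of_succ_nat b).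
Proof.
  intros z b. destruct (zdec_surj z) as [a Ha].
  exists (Cantor.to_nat (a, b)). unfold qdec. rewrite Cantor.cancel_of_to. now rewrite Ha.
Qed.

Lemma IZR_pos_succ : forall b, IZR (Z.pos (Pos.of_succ_nat b)) = INR (S b).
Proof.
  intro b. rewrite INR_IZR_INZ. rewrite <- (SuccNat2Pos.id_succ b).
  now rewrite positive_nat_Z.
Qed.

Lemma q_approx : forall x k, exists m, Rabs (Q2R (qdec m) - x) <= (/2)^(S k).
Proof.
  intros x k. set (b := (2 ^ S k)%nat). set (D := INR (S b)).
  assert (HD : (2 ^ S k) <= D).
  { unfold D, b. rewrite S_INR, pow_INR. replace (INR 2) with 2 by (simpl; lra). lra. }
  assert (Hp : 0 < 2 ^ S k) by (apply pow_lt; lra).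
  destruct (archimed (x * D)) as [H1 H2].
  destruct (qdec_surj (up (x * D)) b) as [m Hm]. exists m. rewrite Hm.
  unfold Q2R. simpl Qnum. simpl Qden. rewrite IZR_pos_succ. fold D.
  assert (HD0 : 0 < D) by lra.
  assert (Hinv : / D <= (/2)^S k).
  { rewrite pow_inv. apply Rinv_le_contravar; lra. }
  assert (Rabs (IZR (up (x * D)) * / D - x) <= / D).
  { replace (IZR (up (x * D)) * / D - x) with ((IZR (up (x * D)) - x * D) * / D)
      by (field; lra).
    rewrite Rabs_mult, (Rabs_right (/ D)) by (apply Rle_ge, Rlt_le, Rinv_0_lt_compat; lra).
    rewrite Rabs_right by lra.
    assert (0 < / D) by (apply Rinv_0_lt_compat; lra). nra. }
  lra.
Qed.

Lemma cdist_small : forall z w e, 0 <= e ->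
  Rabs (fst z - fst w) <= e / 2 -> Rabs (snd z - snd w) <= e / 2 -> cdist z w <= e.
Proof.
  intros z w e He H1 H2. unfold cdist.
  rewrite <- (sqrt_pow2 e He). apply sqrt_le_1_alt.
  assert (A1 : (fst z - fst w)^2 = Rabs (fst z - fst w) * Rabs (fst z - fst w)).
  { rewrite <- Rabs_mult. simpl. rewrite Rmult_1_r. rewrite Rabs_right; [lra|].
    apply Rle_ge, Rle_0_sqr. }
  assert (A2 : (snd z - snd w)^2 = Rabs (snd z - snd w) * Rabs (snd z - snd w)).
  { rewrite <- Rabs_mult. simpl. rewrite Rmult_1_r. rewrite Rabs_right; [lra|].
    apply Rle_ge, Rle_0_sqr. }
  rewrite A1, A2.
  pose proof (Rabs_pos (fst z - fst w)). pose proof (Rabs_pos (snd z - snd w)).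
  simpl. nra.
Qed.

Lemma c_approx : forall z k, exists m, cdist (gqdec m) z <= (/2)^k.
Proof.
  intros [x y] k. destruct (q_approx x k) as [a Ha]. destruct (q_approx y k) as [b Hb].
  exists (Cantor.to_nat (a, b)). unfold gqdec. rewrite Cantor.cancel_of_to.
  apply cdist_small. { apply pow_le; lra. }
  - simpl. simpl in Ha. lra.
  - simpl. simpl in Hb. lra.
Qed.

Lemma cdist_fst : forall z w, Rabs (fst z - fst w) <= cdist z w.
Proof.
  intros z w. unfold cdist. rewrite <- sqrt_Rsqr_abs. apply sqrt_le_1_alt.
  unfold Rsqr. simpl. pose proof (Rle_0_sqr (snd z - snd w)). unfold Rsqr in H. nra.
Qed.

Lemma cdist_snd : forall z w, Rabs (snd z - snd w) <= cdist z w.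
Proof.
  intros z w. unfold cdist. rewrite <- sqrt_Rsqr_abs. apply sqrt_le_1_alt.
  unfold Rsqr. simpl. pose proof (Rle_0_sqr (fst z - fst w)). unfold Rsqr in H. nra.
Qed.

Lemma small_zero : forall a, (forall n, Rabs a <= 2 * (/2)^n) -> a = 0.
Proof.
  intros a H. destruct (Req_dec a 0) as [|Hn]; auto. exfalso.
  assert (Hp : 0 < Rabs a / 2) by (apply Rdiv_lt_0_compat; [apply Rabs_pos_lt|]; lra).
  destruct (pow_lt_1_zero (/2) ltac:(rewrite Rabs_right; lra) _ Hp) as [N HN].
  specialize (HN N (Nat.le_refl _)). specialize (H N).
  rewrite Rabs_right in HN by (apply Rle_ge, pow_le; lra). lra.
Qed.

Lemma cauchy_unique : forall p z z', cauchy_name p z -> cauchy_name p z' -> z = z'.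
Proof.
  unfold cauchy_name. intros p [x y] [x' y'] H H'.
  assert (x = x').
  { apply Rminus_diag_uniq, small_zero. intro n.
    pose proof (cdist_fst (gqdec (p n)) (x, y)). pose proof (cdist_fst (gqdec (p n)) (x', y')).
    specialize (H n). specialize (H' n). simpl in *.
    replace (x - x') with (-(fst (gqdec (p n)) - x) + (fst (gqdec (p n)) - x')) by ring.
    eapply Rle_trans; [apply Rabs_triang|]. rewrite Rabs_Ropp. lra. }
  assert (y = y').
  { apply Rminus_diag_uniq, small_zero. intro n.
    pose proof (cdist_snd (gqdec (p n)) (x, y)). pose proof (cdist_snd (gqdec (p n)) (x', y')).
    specialize (H n). specialize (H' n). simpl in *.
    replace (y - y') with (-(snd (gqdec (p n)) - y) + (snd (gqdec (p n)) - y')) by ring.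
    eapply Rle_trans; [apply Rabs_triang|]. rewrite Rabs_Ropp. lra. }
  subst; reflexivity.
Qed.

Lemma ILam_rep {Omega : Type} (fs : nat -> Omega -> Cx) : is_rep (ILam_name fs).
Proof.
  split.
  - intros p [x Hx] [x' Hx'] H H'. unfold ILam_name, prod_cauchy_name in *. simpl in *.
    assert (x = x').
    { apply functional_extensionality. intro n. eapply cauchy_unique; eauto. }
    subst. f_equal. apply proof_irrelevance.
  - intros [x Hx]. unfold ILam_name, prod_cauchy_name, cauchy_name. simpl.
    assert (G : forall nk : nat * nat, exists m, cdist (gqdec m) (x (fst nk)) <= (/2)^(snd nk)).
    { intros [n k]. apply c_approx. }
    destruct (choice _ G) as [g Hg].
    exists (fun m => g (Cantor.of_nat m)). intros n k. unfold npair.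
    rewrite Cantor.cancel_of_to. apply (Hg (n, k)).
Qed.

Lemma Xihat_sv {Omega M : Type} (fs : nat -> Omega -> Cx) (Xi : Omega -> M) :
  consistent fs Xi -> single_valued (Xihat fs Xi).
Proof.
  intros Hc x m m' [A [HA1 HA2]] [B [HB1 HB2]]. subst.
  destruct (classic (Xi A = Xi B)) as [|Hne]; auto.
  destruct (Hc A B Hne) as [n Hn]. exfalso. apply Hn.
  change (Ev fs A n = Ev fs B n). rewrite HA1, HB1. reflexivity.
Qed.

Theorem mainTheorem16 (Omega M : Type) (fs : nat -> Omega -> Cx) (Xi : Omega -> M)
  (deltaM : naming M) (R : PFun -> Prop) :
  consistent fs Xi ->
  is_rep deltaM ->
  (forall (X Y : Type) (nX : naming X) (nY : naming Y) (f : X -> Y -> Prop),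
      is_rep nX -> is_rep nY -> single_valued f ->
      forall k : nat,
        WeihR R nX nY f baire_name baire_name (limk k) <->
        exists K, R K /\ tower_pre nX nY f k K) ->
  SCI_AR fs Xi R deltaM = rankR R (ILam_name fs) deltaM (Xihat fs Xi).
Proof.
  intros Hc Hrep Hnf. unfold SCI_AR, rankR.
  f_equal. apply functional_extensionality. intro k.
  apply propositional_extensionality. symmetry.
  apply Hnf; auto. apply ILam_rep. apply Xihat_sv; auto.
Qed.
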